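(* Let $n\ge3$ and suppose $T=T_\lambda(r,m)$ acts linearly and inner faithfully on $\Bbbk\overline{Q}$ so that $g$ acts by a rotation: $g\cdot e_i=e_{i+d}$, $g\cdot a_i=\mu_ia_{i+d}$, $g\cdot a_i^*=\mu_i^*a^*_{i+d}$ for some integer $0<d\le n-1$ and $\mu_i,\mu_i^*\in\Bbbk^\times$. Let $\sigma$ be the quiver-Taft map of the action. If $n\ne4$ or $d\ne2$, then $\sigma^r(a)=0$ for every arrow $a$ of $\overline{Q}$.
   Context: Let $\Bbbk$ be a field, $r>1$ and $m$ positive integers with $r\mid m$, and $\lambda\in\Bbbk$ a primitive $r$-th root of unity, with $r$ coprime to the characteristic of $\Bbbk$. The generalized Taft algebra $T=T_\lambda(r,m)$ is the Hopf algebra generated by $g,x$ with relations $gx=\lambda xg$, $g^m=1$, $x^r=0$, $\Delta(g)=g\otimes g$, $\Delta(x)=1\otimes x+x\otimes g$, $\varepsilon(g)=1,\varepsilon(x)=0$, $S(g)=g^{-1}$, $S(x)=-xg^{-1}$. An action of $T$ on an algebra $A$ is a $T$-module algebra structure; so $g$ acts by an algebra automorphism and $x\cdot(ab)=a(x\cdot b)+(x\cdot a)(g\cdot b)$. It is inner faithful if no nonzero Hopf ideal $I$ of $T$ satisfies $I\cdot A=0$. Vertex indices are taken modulo $n$. $\overline{Q}$ has vertices $0,\dots,n-1$ and arrows $a_i:i\to i+1$, $a_i^*:i+1\to i$; in $\Bbbk\overline{Q}$, $e_i$ is the trivial path at $i$, $s(a),t(a)$ source and target, and $pq$ is concatenation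 ($p$ then $q$) if $t(p)=s(q)$, else $0$. A linear action: $g$ acts by a path-length-preserving automorphism ($g\cdot e_i=e_{g\cdot i}$) and $x$ maps vertices into the span of vertices and arrows into the span of vertices and arrows. Then there are scalars $\gamma_i$ with $x\cdot e_i=\gamma_ie_i-\gamma_i\lambda^{-1}e_{g\cdot i}$; the quiver-Taft map $\sigma$ is the linear map on the span of vertices and arrows with $\sigma(e_i)=0$ and $\sigma(a)=x\cdot a-\gamma_{t(a)}a+\gamma_{s(a)}\lambda^{-1}(g\cdot a)$ for arrows $a$; $\sigma^r$ is its $r$-fold iterate. *)

(* Defs.v *)
From HB Require Import structures.
From mathcomp Require Import all_boot all_order all_algebra.
Import GRing.Theory.
Local Open Scope ring_scope.

(* The generalized Taft algebra T = T_lam(r,m), given concretely by    *)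
(* its PBW basis g^i x^j (i < m, j < r).  An element of T is the       *)
Section Taft.
Variables (k : fieldType) (m r : nat) (lam : k).

Definition TB := ('I_m * 'I_r)%type.
Definition Telt := TB -> k.

Definition tzero : Telt := fun _ => 0.
Definition tadd (u v : Telt) : Telt := fun b => u b + v b.
Definition tscale (c : k) (u : Telt) : Telt := fun b => c * u b.
Definition tbasis (b : TB) : Telt := fun c => (c == b)%:R.

(* (g^i x^j)(g^i' x^j') = lam^(-j i') g^(i+i' mod m) x^(j+j')   (0 if j+j' >= r);
   this encodes  gx = lam xg,  g^m = 1,  x^r = 0. *)
Definition tmulB (b1 b2 : TB) : Telt := fun c =>
  if ((c.1 : nat) == ((b1.1 + b2.1) %% m)%N) && ((c.2 : nat) == (b1.2 + b2.2)%N)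
  then lam^-1 ^+ (b1.2 * b2.1) else 0.

Definition tmul (u v : Telt) : Telt := fun c =>
  \sum_(b1 : TB) \sum_(b2 : TB) u b1 * v b2 * tmulB b1 b2 c.

Definition tone : Telt := fun c => (((c.1 : nat) == 0%N) && ((c.2 : nat) == 0%N))%:R.
Definition tg : Telt := fun c => (((c.1 : nat) == (1 %% m)%N) && ((c.2 : nat) == 0%N))%:R.
Definition tx : Telt := fun c => (((c.1 : nat) == 0%N) && ((c.2 : nat) == 1%N))%:R.
Definition tpow (u : Telt) (e : nat) : Telt := iter e (tmul u) tone.

Definition TT := TB -> TB -> k.
Definition tens (u v : Telt) : TT := fun b1 b2 => u b1 * v b2.
Definition tt_mul (U V : TT) : TT := fun c1 c2 =>
  \sum_(b1 : TB) \sum_(b2 : TB) \sum_(d1 : TB) \sum_(d2 : TB)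
     U b1 b2 * V d1 d2 * tmulB b1 d1 c1 * tmulB b2 d2 c2.
Definition tt_one : TT := tens tone tone.
Definition tt_pow (U : TT) (e : nat) : TT := iter e (tt_mul U) tt_one.

Definition tDg : TT := tens tg tg.
Definition tDx : TT := fun c1 c2 => tone c1 * tx c2 + tx c1 * tg c2.
Definition tDeltaB (b : TB) : TT := tt_mul (tt_pow tDg b.1) (tt_pow tDx b.2).
Definition tDelta (u : Telt) : TT := fun c1 c2 => \sum_(b : TB) u b * tDeltaB b c1 c2.

(* counit: eps(g) = 1, eps(x) = 0 *)
Definition teps (u : Telt) : k := \sum_(b : TB) u b * ((b.2 : nat) == 0%N)%:R.

Definition tginv : Telt := tpow tg m.-1.
Definition tSx : Telt := fun c => - tmul tx tginv c.
Definition tSB (b : TB) : Telt := tmul (tpow tSx b.2) (tpow tginv b.1).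
Definition tS (u : Telt) : Telt := fun c => \sum_(b : TB) u b * tSB b c.

Definition hopf_ideal (I : Telt -> Prop) : Prop :=
  I tzero /\
  (forall u v, I u -> I v -> I (tadd u v)) /\
  (forall c u, I u -> I (tscale c u)) /\
  (forall u v, I u -> I (tmul u v) /\ I (tmul v u)) /\
  (forall u, I u -> teps u = 0) /\
  (forall u, I u -> exists (N : nat) (a b c d : nat -> Telt),
      (forall i, (i < N)%N -> I (a i) /\ I (d i)) /\
      tDelta u = (fun c1 c2 => \sum_(i < N) (a i c1 * b i c2 + c i c1 * d i c2))) /\
  (forall u, I u -> I (tS u)).

End Taft.

(* The path algebra k Qbar of the doubled cyclic quiver on n vertices. *)
(* Vertices are 'Z_n (indices mod n, n >= 3 in the theorem).  At each  *)
(* vertex v there are exactly two outgoing arrows: a_v : v -> v+1      *)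
(* (encoded by false) and a_{v-1}^* : v -> v-1 (encoded by true).      *)
(* Hence a path is (start vertex, list of booleans); the trivial path  *)
(* e_v is (v, [::]).  Elements of k Qbar are the finitely supported    *)
(* functions Path -> k; multiplication is concatenation (p then q).    *)
Section Quiver.
Variables (k : fieldType) (n : nat).

Definition Vert := 'Z_n.
Definition Path := (Vert * seq bool)%type.
Definition KQ := Path -> k.

Definition step (v : Vert) (b : bool) : Vert := if b then v - 1 else v + 1.
Definition walk (v : Vert) (l : seq bool) : Vert := foldl step v l.

Definition kq_zero : KQ := fun _ => 0.
Definition kq_add (f g : KQ) : KQ := fun p => f p + g p.
Definition kq_scale (c : k) (f : KQ) : KQ := fun p => c * f p.
Definition kq_one : KQ := fun p => (p.2 == [::])%:R.
Definition kq_mul (f g : KQ) : KQ := fun p =>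
  \sum_(j < (size p.2).+1)
     f (p.1, take j p.2) * g (walk p.1 (take j p.2), drop j p.2).

Definition vert (v : Vert) : KQ := fun p => (p == (v, [::]))%:R.
Definition arrow (v : Vert) (b : bool) : KQ := fun p => (p == (v, [:: b]))%:R.
(* a_i : i -> i+1   and   a_i^* : i+1 -> i *)
Definition arr_a (i : Vert) : KQ := arrow i false.
Definition arr_as (i : Vert) : KQ := arrow (i + 1) true.

Definition finsupp (f : KQ) : Prop :=
  exists s : seq Path, forall p, p \notin s -> f p = 0.

End Quiver.

Arguments tadd {k m r}. Arguments tscale {k m r}. Arguments tbasis {k m r}.
Arguments tmulB {k m r}. Arguments tmul {k m r}. Arguments tpow {k m r}.
Arguments tens {k m r}. Arguments tt_mul {k m r}. Arguments tt_pow {k m r}.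
Arguments tDeltaB {k m r}. Arguments tDelta {k m r}. Arguments teps {k m r}.
Arguments tS {k m r}. Arguments hopf_ideal {k m r}.
Arguments step {n}. Arguments walk {n}.
Arguments kq_add {k n}. Arguments kq_scale {k n}. Arguments kq_mul {k n}.
Arguments vert {k n}. Arguments arrow {k n}. Arguments arr_a {k n}.
Arguments arr_as {k n}. Arguments finsupp {k n}.

Section Action.
Variables (k : fieldType) (m r : nat) (lam : k) (n : nat).
Variable act : Telt k m r -> KQ k n -> KQ k n.

Definition taft_module_algebra : Prop :=
  (forall u f, finsupp f -> finsupp (act u f)) /\
  (forall u f, finsupp f ->
     act u f = (fun p => \sum_(b : TB m r) u b * act (tbasis b) f p)) /\
  (forall u f g, finsupp f -> finsupp g ->
     act u (kq_add f g) = kq_add (act u f) (act u g)) /\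
  (forall u c f, finsupp f -> act u (kq_scale c f) = kq_scale c (act u f)) /\
  (forall f, finsupp f -> act (tone k m r) f = f) /\
  (forall u v f, finsupp f -> act (tmul lam u v) f = act u (act v f)) /\
  (forall u f g, finsupp f -> finsupp g ->
     act u (kq_mul f g) =
     (fun p => \sum_(b1 : TB m r) \sum_(b2 : TB m r)
        tDelta lam u b1 b2 * kq_mul (act (tbasis b1) f) (act (tbasis b2) g) p)) /\
  (forall u, act u (kq_one k n) = kq_scale (teps u) (kq_one k n)).

Definition inner_faithful : Prop :=
  forall I : Telt k m r -> Prop, hopf_ideal lam I ->
    (forall u f, I u -> finsupp f -> act u f = kq_zero k n) ->
    forall u, I u -> u = tzero k m r.

Definition linear_action : Prop :=
  (forall i, exists j, act (tg k m r) (vert i) = vert j) /\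
  (forall (L : nat) f, finsupp f -> (forall p, size p.2 != L -> f p = 0) ->
     forall p, size p.2 != L -> act (tg k m r) f p = 0) /\
  (forall i p, p.2 != [::] -> act (tx k m r) (vert i) p = 0) /\
  (forall v b p, (1 < size p.2)%N -> act (tx k m r) (arrow v b) p = 0).

(* gamma_i : coefficient of e_i in x.e_i  (= gamma_i e_i - gamma_i lam^-1 e_{g.i}
   with g.i <> i) *)
Definition gamma (i : Vert n) : k := act (tx k m r) (vert i) (i, [::]).

(* quiver-Taft map on an arrow a with source v:
   sigma(a) = x.a - gamma_{t(a)} a + gamma_{s(a)} lam^-1 (g.a) *)
Definition sigma_arr (v : Vert n) (b : bool) : KQ k n := fun p =>
  act (tx k m r) (arrow v b) p - gamma (step v b) * arrow v b p
  + gamma v * lam^-1 * act (tg k m r) (arrow v b) p.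

(* sigma on the span of vertices and arrows (sigma(e_i) = 0) *)
Definition sigma (f : KQ k n) : KQ k n := fun p =>
  \sum_(v : Vert n) \sum_(b : bool) f (v, [:: b]) * sigma_arr v b p.

End Action.

Arguments taft_module_algebra {k m r} lam {n} act.
Arguments inner_faithful {k m r} lam {n} act.
Arguments linear_action {k m r n} act.
Arguments gamma {k m r n} act i.
Arguments sigma_arr {k m r} lam {n} act v b.
Arguments sigma {k m r} lam {n} act f.

(* Main.v *)
Require Import Defs.
From HB Require Import structures.
From mathcomp Require Import all_boot all_order all_algebra.
From mathcomp Require Import ring zify.
From Stdlib Require Import FunctionalExtensionality.
Import GRing.Theory.
Local Open Scope ring_scope.
Set Implicit Arguments.
Unset Strict Implicit.

Lemma sum_only (K : fieldType) (T : finType) (a : T) (F : T -> K) :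
  (forall b, b != a -> F b = 0) -> \sum_b F b = F a.
Proof. by move=> H; rewrite (bigD1 a) //= big1 ?addr0 // => b /H. Qed.

Arguments sum_only {K T} a F.

Section TaftCalc.
Variables (k : fieldType) (m r : nat) (lam : k).
Hypotheses (Hm : (1 < m)%N) (Hr : (1 < r)%N).

Definition o0m : 'I_m := Ordinal (ltnW Hm).
Definition o1m : 'I_m := Ordinal Hm.
Definition o0r : 'I_r := Ordinal (ltnW Hr).
Definition o1r : 'I_r := Ordinal Hr.
Definition e00 : TB m r := (o0m, o0r).
Definition e01 : TB m r := (o0m, o1r).
Definition e10 : TB m r := (o1m, o0r).

Lemma pair_eqn (c d : TB m r) :
  (c == d) = ((c.1 : nat) == d.1) && ((c.2 : nat) == d.2).
Proof. by case: c => c1 c2; case: d => d1 d2. Qed.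

Lemma tone_ind c : tone k m r c = (c == e00)%:R.
Proof. by rewrite /tone pair_eqn. Qed.
Lemma tx_ind c : tx k m r c = (c == e01)%:R.
Proof. by rewrite /tx pair_eqn. Qed.
Lemma tg_ind c : tg k m r c = (c == e10)%:R.
Proof. by rewrite /tg pair_eqn /= modn_small. Qed.

Lemma tbasis00 : tbasis e00 = tone k m r.
Proof. by apply: functional_extensionality => c; rewrite tone_ind. Qed.
Lemma tbasis01 : tbasis e01 = tx k m r.
Proof. by apply: functional_extensionality => c; rewrite tx_ind. Qed.
Lemma tbasis10 : tbasis e10 = tg k m r.
Proof. by apply: functional_extensionality => c; rewrite tg_ind. Qed.

Lemma tmulB0l d c : tmulB lam e00 d c = (c == d)%:R.
Proof.
rewrite /tmulB pair_eqn /= add0n mul0n expr0 modn_small //.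
by case: ifP.
Qed.
Lemma tmulB0r d c : tmulB lam d e00 c = (c == d)%:R.
Proof.
rewrite /tmulB pair_eqn /= !addn0 muln0 expr0 modn_small //.
by case: ifP.
Qed.

Lemma tt_mul1l V c1 c2 : tt_mul lam (tt_one k m r) V c1 c2 = V c1 c2.
Proof.
rewrite /tt_mul /tt_one /tens (sum_only e00) => [|b1 Hb1]; last first.
  by do 3! (rewrite big1 // => ? _); rewrite tone_ind (negbTE Hb1) !mul0r.
rewrite (sum_only e00) => [|b2 Hb2]; last first.
  by do 2! (rewrite big1 // => ? _); rewrite (tone_ind b2) (negbTE Hb2) !(mulr0, mul0r).
rewrite (sum_only c1) => [|d1 Hd1]; last first.
  by rewrite big1 // => ? _; rewrite tmulB0l eq_sym (negbTE Hd1) !(mulr0, mul0r).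
rewrite (sum_only c2) => [|d2 Hd2]; last first.
  by rewrite (tmulB0l d2) eq_sym (negbTE Hd2) !(mulr0, mul0r).
by rewrite !tmulB0l !tone_ind !eqxx !(mulr1, mul1r).
Qed.

Lemma tt_mul1r V c1 c2 : tt_mul lam V (tt_one k m r) c1 c2 = V c1 c2.
Proof.
rewrite /tt_mul /tt_one /tens.
have E : forall b1 b2, \sum_(d1 : TB m r) \sum_(d2 : TB m r)
   V b1 b2 * (tone k m r d1 * tone k m r d2) * tmulB lam b1 d1 c1 * tmulB lam b2 d2 c2
   = V b1 b2 * (c1 == b1)%:R * (c2 == b2)%:R.
  move=> b1 b2; rewrite (sum_only e00) => [|d1 Hd1]; last first.
    by rewrite big1 // => ? _; rewrite tone_ind (negbTE Hd1) !(mulr0, mul0r).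
  rewrite (sum_only e00) => [|d2 Hd2]; last first.
    by rewrite (tone_ind d2) (negbTE Hd2) !(mulr0, mul0r).
  by rewrite !tmulB0r !tone_ind !eqxx !(mulr1, mul1r).
rewrite (eq_bigr _ (fun b1 _ => eq_bigr _ (fun b2 _ => E b1 b2))).
rewrite (sum_only c1) => [|b1 Hb1]; last first.
  by rewrite big1 // => ? _; rewrite eq_sym (negbTE Hb1) !(mulr0, mul0r).
rewrite (sum_only c2) => [|b2 Hb2]; last first.
  by rewrite (eq_sym c2) (negbTE Hb2) !(mulr0, mul0r).
by rewrite !eqxx !mulr1.
Qed.
Lemma tDelta_tx c1 c2 :
  tDelta lam (tx k m r) c1 c2 = tone k m r c1 * tx k m r c2 + tx k m r c1 * tg k m r c2.
Proof.
rewrite /tDelta (sum_only e01) => [|b Hb]; last by rewrite tx_ind (negbTE Hb) mul0r.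
rewrite tx_ind eqxx mul1r /tDeltaB /=.
by rewrite tt_mul1l tt_mul1r.
Qed.

Lemma tmul_ind (u v : Telt k m r) a b c :
  (forall x, u x = (x == a)%:R) -> (forall x, v x = (x == b)%:R) ->
  tmul lam u v c = tmulB lam a b c.
Proof.
move=> Hu Hv; rewrite /tmul (sum_only a) => [|b1 Hb1]; last first.
  by rewrite big1 // => ? _; rewrite Hu (negbTE Hb1) !mul0r.
rewrite (sum_only b) => [|b2 Hb2]; last by rewrite (Hv b2) (negbTE Hb2) !(mulr0,mul0r).
by rewrite Hu Hv !eqxx !mul1r.
Qed.

Lemma tmul_xg : tmul lam (tx k m r) (tg k m r) =
   tscale lam^-1 (tmul lam (tg k m r) (tx k m r)).
Proof.
apply: functional_extensionality => c.
rewrite /tscale (@tmul_ind _ _ e01 e10 c tx_ind tg_ind).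
rewrite (@tmul_ind _ _ e10 e01 c tg_ind tx_ind).
rewrite /tmulB /= !addn0 !add0n muln0 expr0 muln1 expr1.
by case: ifP; rewrite ?mulr1 ?mulr0.
Qed.

Lemma tmul_xx : r = 2%N -> tmul lam (tx k m r) (tx k m r) = tzero k m r.
Proof.
move=> r2; apply: functional_extensionality => c.
rewrite (@tmul_ind _ _ e01 e01 c tx_ind tx_ind).
rewrite /tmulB /=.
have Hc : (c.2 < 2)%N by rewrite -r2 ltn_ord.
by rewrite (_ : (c.2 : nat) == (1 + 1)%N = false) ?andbF //; apply/negbTE; rewrite neq_ltn Hc.
Qed.
Lemma tDelta_tx_sum (F : TB m r -> TB m r -> k) :
  \sum_b1 \sum_b2 tDelta lam (tx k m r) b1 b2 * F b1 b2 = F e00 e01 + F e01 e10.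
Proof.
under eq_bigr => b1 _ do under eq_bigr => b2 _ do
  rewrite tDelta_tx tone_ind tx_ind (tx_ind b1) tg_ind mulrDl.
under eq_bigr => b1 _ do rewrite big_split /=.
rewrite big_split /=; congr (_ + _).
  rewrite (sum_only e00) => [|b1 Hb1]; last first.
    by rewrite big1 // => b2 _; rewrite (negbTE Hb1) !mul0r.
  rewrite (sum_only e01) => [|b2 Hb2]; last by rewrite (negbTE Hb2) !(mulr0,mul0r).
  by rewrite !eqxx !mul1r.
rewrite (sum_only e01) => [|b1 Hb1]; last first.
  by rewrite big1 // => b2 _; rewrite (negbTE Hb1) !mul0r.
rewrite (sum_only e10) => [|b2 Hb2]; last by rewrite (negbTE Hb2) !(mulr0,mul0r).
by rewrite !eqxx !mul1r.
Qed.
End TaftCalc.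

Section Quiv.
Variables (k : fieldType) (n : nat).
Implicit Types (f g : KQ k n) (u w : Vert n).

Lemma vert_nil u w l : l != [::] -> vert (k:=k) u (w, l) = 0.
Proof. by move=> Hl; rewrite /vert xpair_eqE (negbTE Hl) andbF. Qed.

Lemma kq_mul_vert_l u f p : kq_mul (vert u) f p = (p.1 == u)%:R * f p.
Proof.
case: p => p1 l; rewrite /kq_mul /= big_ord_recl /= take0 drop0 big1 ?addr0.
  by rewrite /vert xpair_eqE eqxx andbT.
move=> i _; rewrite vert_nil ?mul0r //.
rewrite -size_eq0 size_take /bump /= add1n; case: ifP => // _; rewrite -lt0n; exact: (leq_ltn_trans (leq0n i) (ltn_ord i)).
Qed.

Lemma kq_mul_vert_r u f p : kq_mul f (vert u) p = f p * (walk p.1 p.2 == u)%:R.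
Proof.
case: p => p1 l; rewrite /kq_mul /= big_ord_recr /= take_size drop_size big1 ?add0r.
  by rewrite /vert xpair_eqE eqxx andbT.
move=> i _; rewrite vert_nil ?mulr0 //.
by rewrite -size_eq0 size_drop subn_eq0 -ltnNge ltn_ord.
Qed.

Lemma kq_mul0 f g w : kq_mul f g (w, [::]) = f (w, [::]) * g (w, [::]).
Proof. by rewrite /kq_mul /= big_ord_recl big_ord0 addr0. Qed.

Lemma kq_mul1 f g w b : kq_mul f g (w, [:: b]) =
  f (w, [::]) * g (w, [:: b]) + f (w, [:: b]) * g (step w b, [::]).
Proof. by rewrite /kq_mul /= big_ord_recl big_ord_recl big_ord0 addr0. Qed.

Lemma finsupp_vert u : finsupp (vert (k:=k) u).
Proof.
exists [:: (u, [::])] => p; rewrite inE /vert => /negbTE ->; done.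
Qed.
Lemma finsupp_arrow u b : finsupp (arrow (k:=k) u b).
Proof.
exists [:: (u, [:: b])] => p; rewrite inE /arrow => /negbTE ->; done.
Qed.
Lemma finsupp_scale c f : finsupp f -> finsupp (kq_scale c f).
Proof. by case=> s Hs; exists s => p /Hs; rewrite /kq_scale => ->; rewrite mulr0. Qed.
Lemma finsupp_add f g : finsupp f -> finsupp g -> finsupp (kq_add f g).
Proof.
case=> s Hs [t Ht]; exists (s ++ t) => p; rewrite mem_cat negb_or => /andP[/Hs Hp /Ht Hq].
by rewrite /kq_add Hp Hq addr0.
Qed.
Lemma finsupp_zero : finsupp (kq_zero k n).
Proof. by exists [::]. Qed.

Lemma kq_mul_vv u w : u != w -> kq_mul (vert (k:=k) u) (vert w) = kq_zero k n.
Proof.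
move=> Huw; apply: functional_extensionality => p.
rewrite kq_mul_vert_l /kq_zero /vert.
case: p => p1 l /=; rewrite !xpair_eqE.
case: (eqVneq p1 u) => [->|]; last by rewrite mul0r.
by rewrite (negbTE Huw) mulr0.
Qed.


Lemma vert0 u j : vert (k:=k) u (j, [::]) = (j == u)%:R.
Proof. by rewrite /vert xpair_eqE eqxx andbT. Qed.
Lemma arrow0 u b j : arrow (k:=k) u b (j, [::]) = 0.
Proof. by rewrite /arrow xpair_eqE andbF. Qed.
Lemma arrow1 u b j b' : arrow (k:=k) u b (j, [:: b']) = ((j == u) && (b' == b))%:R.
Proof. by rewrite /arrow xpair_eqE eqseq_cons andbT. Qed.
Lemma vert1 u j b' : vert (k:=k) u (j, [:: b']) = 0.
Proof. by rewrite /vert xpair_eqE andbF. Qed.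
Lemma arrow_long u b p : (1 < size p.2)%N -> arrow (k:=k) u b p = 0.
Proof.
move=> H; rewrite /arrow; case: eqP => // Ep; by rewrite Ep in H.
Qed.
End Quiv.

Ltac lin1 c1 c2 :=
  match goal with
  | Z1 : ?a1 = 0, Z2 : ?a2 = 0 |- ?A = ?B =>
     apply/eqP; rewrite -subr_eq0; apply/eqP;
     (have -> : A - B = (c1%:~R) * a1 + (c2%:~R) * a2 by ring);
     by rewrite Z1 ?Z2 !mulr0 addr0
  end.
Ltac slin := first [lin1 (-1)%Z 0%Z | lin1 0%Z (-1)%Z | lin1 1%Z (-1)%Z | lin1 (-1)%Z 1%Z].

Section Zn.
Variable n : nat.
Hypothesis Hn : (3 <= n)%N.

Lemma step_s (v : Vert n) b : step v b = v + (if b then -1 else 1).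
Proof. by case: b. Qed.

Lemma ZnA (v x : Vert n) b b' b'' :
  step v b' = step v b + x -> step v b'' = step v b' + x ->
  x = 0 \/ (x = 2%:R /\ (4%:R : Vert n) = 0).
Proof.
rewrite !step_s => /eqP; rewrite -subr_eq0 => /eqP Z1 /eqP; rewrite -subr_eq0 => /eqP Z2.
by case: b b' b'' Z1 Z2 => [] [] [] /= Z1 Z2; first [left; slin | right; split; slin].
Qed.

Lemma ZnB (v x : Vert n) b b' :
  step v b' = step v b + x -> v = step v b' + x -> x = 0 \/ (3%:R : Vert n) = 0.
Proof.
rewrite !step_s => /eqP; rewrite -subr_eq0 => /eqP Z1 /eqP; rewrite -subr_eq0 => /eqP Z2.
by case: b b' Z1 Z2 => [] [] /= Z1 Z2; first [left; slin | right; slin].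
Qed.

Lemma Zn_dvd N : (N%:R : Vert n) = 0 -> (n %| N)%N.
Proof.
move=> H; have := congr1 (fun y : Vert n => nat_of_ord y) H; rewrite /= val_Zp_nat; last by apply: leq_trans Hn.
by move=> E; rewrite /dvdn E.
Qed.

Lemma Zn_small N : (N < n)%N -> (N%:R : Vert n) = 0 -> N = 0%N.
Proof.
move=> HN /Zn_dvd; case: N HN => // N HN /dvdn_leq => /(_ isT); lia.
Qed.

Lemma Zn_eq N M : (N < n)%N -> (M < n)%N -> (N%:R : Vert n) = M%:R -> N = M.
Proof.
move=> HN HM H; have := congr1 (fun y : Vert n => nat_of_ord y) H; rewrite /= !val_Zp_nat; try by apply: leq_trans Hn.
by rewrite !modn_small.
Qed.

Lemma ZnD (v : Vert n) b1 b2 : step v b1 = step v b2 -> b1 = b2.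
Proof.
rewrite !step_s => E; case: b1 b2 E => [] [] // /eqP; rewrite -subr_eq0 => /eqP Z1; exfalso.
- have : (2%:R : Vert n) = 0.
    apply/eqP; rewrite -subr_eq0; apply/eqP.
    have -> : (2%:R : Vert n) - 0 = -1 * ((v + -1) - (v + 1)) + 0 * 0 by ring.
    by rewrite Z1 !mulr0 addr0.
  by move/Zn_small; lia.
- have : (2%:R : Vert n) = 0.
    apply/eqP; rewrite -subr_eq0; apply/eqP.
    have -> : (2%:R : Vert n) - 0 = 1 * ((v + 1) - (v + -1)) + 0 * 0 by ring.
    by rewrite Z1 !mulr0 addr0.
  by move/Zn_small; lia.
Qed.
End Zn.

Section Act.
Variables (k : fieldType) (m r : nat) (lam : k) (n : nat).
Variable act : Telt k m r -> KQ k n -> KQ k n.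
Variable d : nat.
Hypotheses (Hm : (1 < m)%N) (Hr : (1 < r)%N).
Hypothesis Hmod : taft_module_algebra lam act.
Hypothesis Hlin : linear_action act.
Hypothesis Hd : (d%:R : Vert n) != 0.
Hypothesis Hn : (3 <= n)%N.
Hypothesis Hdn : (d < n)%N.
Hypothesis Hnd : (n != 4%N) \/ (d != 2%N).
Hypothesis Hprim : r.-primitive_root lam.
Hypothesis Hgv : forall i : Vert n, act (tg k m r) (vert i) = vert (i + d%:R).
Hypothesis Hga : forall (v : Vert n) b, exists c,
  act (tg k m r) (arrow v b) = kq_scale c (arrow (v + d%:R) b).

Local Notation X := (act (tx k m r)).
Local Notation G := (act (tg k m r)).

Lemma act_scaleT c u f : finsupp f -> act (tscale c u) f = kq_scale c (act u f).
Proof.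
move=> Hf; have [_ [Hl _]] := Hmod.
rewrite (Hl _ _ Hf) (Hl u f Hf); apply: functional_extensionality => p.
by rewrite /kq_scale /tscale mulr_sumr; apply: eq_bigr => b _; rewrite mulrA.
Qed.

Lemma act_zeroT f : finsupp f -> act (tzero k m r) f = kq_zero k n.
Proof.
move=> Hf; have [_ [Hl _]] := Hmod.
rewrite (Hl _ _ Hf); apply: functional_extensionality => p.
by rewrite big1 // => b _; rewrite mul0r.
Qed.

Lemma act_one f : finsupp f -> act (tone k m r) f = f.
Proof. by have [_ [_ [_ [_ [H _]]]]] := Hmod; apply: H. Qed.

Lemma leibniz f g : finsupp f -> finsupp g ->
  X (kq_mul f g) = fun p => kq_mul f (X g) p + kq_mul (X f) (G g) p.
Proof.
move=> Hf Hg; have [_ [_ [_ [_ [_ [_ [H _]]]]]]] := Hmod.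
rewrite H //; apply: functional_extensionality => p.
rewrite (tDelta_tx_sum _ Hm Hr) tbasis00 tbasis01 tbasis10 act_one //.
Qed.



Lemma act_add u f g : finsupp f -> finsupp g -> act u (kq_add f g) = kq_add (act u f) (act u g).
Proof. by have [_ [_ [H _]]] := Hmod; apply: H. Qed.
Lemma act_scale u c f : finsupp f -> act u (kq_scale c f) = kq_scale c (act u f).
Proof. by have [_ [_ [_ [H _]]]] := Hmod; apply: H. Qed.
Lemma act_mul u v f : finsupp f -> act (tmul lam u v) f = act u (act v f).
Proof. by have [_ [_ [_ [_ [_ [H _]]]]]] := Hmod; apply: H. Qed.
Lemma act_fs u f : finsupp f -> finsupp (act u f).
Proof. by have [H _] := Hmod; apply: H. Qed.

Lemma X0 : X (kq_zero k n) = kq_zero k n.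
Proof.
have E : kq_zero k n = kq_scale 0 (kq_zero k n).
  by apply: functional_extensionality => p; rewrite /kq_scale mul0r.
rewrite {1}E act_scale; last exact: finsupp_zero.
apply: functional_extensionality => p; rewrite /kq_scale mul0r //.
Qed.

Lemma gx f : finsupp f -> X (G f) = kq_scale lam^-1 (G (X f)).
Proof.
move=> Hf; rewrite -!act_mul // (tmul_xg _ Hm Hr) act_scaleT //.
Qed.

Lemma V0 i p : p.2 != [::] -> X (vert i) p = 0.
Proof. by have [_ [_ [H _]]] := Hlin; apply: H. Qed.

Lemma Hdd (i : Vert n) : i + d%:R != i.
Proof. by rewrite -subr_eq0 addrC addKr. Qed.

Lemma V1 i j : j != i -> j != i + d%:R -> X (vert i) (j, [::]) = 0.
Proof.
move=> H1 H2.
have E : kq_mul (vert (k:=k) i) (vert i) = vert i.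
  apply: functional_extensionality => p; rewrite kq_mul_vert_l /vert.
  by case: p => p1 l; rewrite xpair_eqE /=; case: (p1 == i); rewrite ?mul1r ?mul0r.
have := congr1 (fun F => F (j, [::])) (leibniz (finsupp_vert k i) (finsupp_vert k i)).
rewrite E /= kq_mul_vert_l Hgv kq_mul_vert_r /= (negbTE H1) (negbTE H2).
by rewrite mul0r mulr0 add0r.
Qed.

Definition delta i := X (vert i) (i + d%:R, [::]).

Lemma V2 i : delta i = - gamma act (i + d%:R).
Proof.
have := congr1 (fun F => F (i + d%:R, [::])) (leibniz (finsupp_vert k (i + d%:R)) (finsupp_vert k i)).
rewrite kq_mul_vv ?Hdd // X0 /kq_zero /= kq_mul_vert_l Hgv kq_mul_vert_r /= !eqxx mul1r mulr1.
by move/eqP; rewrite eq_sym addr_eq0 => /eqP.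
Qed.

Lemma Vdec i : X (vert i) =
  kq_add (kq_scale (gamma act i) (vert i)) (kq_scale (delta i) (vert (i + d%:R))).
Proof.
apply: functional_extensionality => -[j l].
rewrite /kq_add /kq_scale.
case: (eqVneq l [::]) => [->|Hl]; last first.
  by rewrite V0 // !vert_nil // !mulr0 addr0.
rewrite !vert0.
case: (eqVneq j i) => [->|H1].
  by rewrite eq_sym (negbTE (Hdd i)) mulr1 mulr0 addr0.
case: (eqVneq j (i + d%:R)) => [->|H2].
  by rewrite mulr0 mulr1 add0r.
by rewrite V1 // !mulr0 addr0.
Qed.

Lemma V3 i : gamma act (i + d%:R) = lam^-1 * gamma act i.
Proof.
have := congr1 (fun F => F (i + d%:R, [::])) (gx (finsupp_vert k i)).
rewrite Hgv /kq_scale (Vdec i) act_add; try by apply: finsupp_scale; apply: finsupp_vert.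
rewrite /kq_add !act_scale; try exact: finsupp_vert.
rewrite !Hgv /kq_scale !vert0 eqxx.
by rewrite eq_sym (negbTE (Hdd _)) mulr1 mulr0 addr0.
Qed.

Lemma V4 i : delta i = - (lam^-1 * gamma act i).
Proof. by rewrite V2 V3. Qed.

Lemma mul_arrow_vert (v : Vert n) b : kq_mul (arrow (k:=k) v b) (vert (step v b)) = arrow v b.
Proof.
apply: functional_extensionality => p; rewrite kq_mul_vert_r /arrow.
by have [->|_] := eqVneq p (v, [:: b]); rewrite ?eqxx ?mulr1 ?mul0r.
Qed.
Lemma mul_vert_arrow (v : Vert n) b : kq_mul (vert (k:=k) v) (arrow v b) = arrow v b.
Proof.
apply: functional_extensionality => p; rewrite kq_mul_vert_l /arrow.
by have [->|_] := eqVneq p (v, [:: b]); rewrite ?eqxx ?mul1r ?mulr0.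
Qed.

Lemma L1 (v : Vert n) b p : X (arrow v b) p = kq_mul (arrow v b) (X (vert (step v b))) p
   + kq_mul (X (arrow v b)) (vert (step v b + d%:R)) p.
Proof.
have := congr1 (fun F => F p) (leibniz (finsupp_arrow k v b) (finsupp_vert k (step v b))).
by rewrite mul_arrow_vert Hgv.
Qed.
Lemma L2 (v : Vert n) b p : X (arrow v b) p = kq_mul (vert v) (X (arrow v b)) p
   + kq_mul (X (vert v)) (G (arrow v b)) p.
Proof.
have := congr1 (fun F => F p) (leibniz (finsupp_vert k v) (finsupp_arrow k v b)).
by rewrite mul_vert_arrow.
Qed.

Lemma key (v : Vert n) b p : sigma_arr lam act v b p != 0 ->
  (exists b', p = (v, [:: b']) /\ step v b' = step v b + d%:R) \/
  (p = (v, [::]) /\ v = step v b + d%:R).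
Proof.
have [c Hc] := Hga v b.
case: p => w l; case: l => [|b' [|b'' l]] Hs.
- right; move: Hs; rewrite /sigma_arr Hc /kq_scale !arrow0 !mulr0 subr0 addr0 => Hs.
  have E1 := L1 v b (w, [::]).
  rewrite kq_mul0 kq_mul0 arrow0 mul0r add0r vert0 in E1.
  have E2 := L2 v b (w, [::]).
  rewrite kq_mul0 kq_mul0 vert0 Hc /kq_scale arrow0 !mulr0 addr0 in E2.
  case: (eqVneq w v) => [Ewv|Hwv]; last by move: Hs; rewrite E2 (negbTE Hwv) mul0r eqxx.
  case: (eqVneq w (step v b + d%:R)) => [Ew|Hw]; last by move: Hs; rewrite E1 (negbTE Hw) mulr0 eqxx.
  by subst w; split.
- move: Hs; rewrite /sigma_arr Hc /kq_scale !arrow1 => Hs.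
  have E1 := L1 v b (w, [:: b']).
  rewrite kq_mul1 kq_mul1 arrow0 mul0r add0r vert1 mulr0 add0r arrow1 vert0 in E1.
  have E2 := L2 v b (w, [:: b']).
  rewrite kq_mul1 kq_mul1 vert0 vert1 mul0r addr0 Hc /kq_scale arrow1 in E2.
  rewrite (@V0 v (w, [:: b'])) // mul0r addr0 in E2.
  case: (eqVneq w v) => [Ewv|Hwv].
    subst w; case: (eqVneq b' b) => [Eb|Hb].
      subst b'; exfalso; move: Hs.
      rewrite E1 !eqxx /= andbT !(eq_sym _ (_ + d%:R)) !(negbTE (Hdd _)) /= !mulr0 mul1r !addr0.
      by rewrite /gamma mulr1 subrr eqxx.
    left; exists b'; split => //.
    apply/eqP; apply: contraNT Hs => Hst.
    rewrite E1 (negbTE Hb) (negbTE Hst) /= !(eq_sym _ (_ + d%:R)) !(negbTE (Hdd _)) /=.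
    by rewrite andbF !mulr0 mul0r !addr0 subr0.
  exfalso; move: Hs; rewrite E2 (negbTE Hwv) /= mul0r add0r !mulr0 subr0.
  have [Ew|Hw] := eqVneq w (v + d%:R); last by rewrite /= !mulr0 addr0 eqxx.
  have [Eb|Hb] := eqVneq b' b; last by rewrite /= !mulr0 addr0 eqxx.
  rewrite Ew /= -/(delta v) V4 !mulr1.
  by rewrite mulNr [lam^-1 * _]mulrC addNr eqxx.
- exfalso; move: Hs; rewrite /sigma_arr Hc /kq_scale !arrow_long //.
  have [_ [_ [_ H]]] := Hlin.
  by rewrite H // !mulr0 subr0 addr0 eqxx.
Qed.

Local Notation sig := (sigma lam act).
Local Notation sa := (sigma_arr lam act).

Lemma sig_arrow (v : Vert n) b : sig (arrow v b) = sa v b.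
Proof.
apply: functional_extensionality => p; rewrite /sigma (sum_only v) => [|v' Hv']; last first.
  by rewrite big1 // => b' _; rewrite arrow1 (negbTE Hv') mul0r.
rewrite (sum_only b) => [|b' Hb']; last by rewrite arrow1 (negbTE Hb') andbF mul0r.
by rewrite arrow1 !eqxx mul1r.
Qed.

Lemma sig_zero f : (forall w c, f (w, [:: c]) = 0) -> sig f = kq_zero k n.
Proof.
move=> H; apply: functional_extensionality => p; rewrite /sigma big1 // => v' _.
by rewrite big1 // => b' _; rewrite H mul0r.
Qed.

Lemma noA (v : Vert n) b b' b'' :
  step v b' = step v b + d%:R -> step v b'' = step v b' + d%:R -> False.
Proof.
move=> E1 E2; case: (ZnA E1 E2) => [Z|[E4 Z4]]; first by move: Hd; rewrite Z eqxx.
have H4 := Zn_dvd Hn Z4.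
have n4 : n = 4%N.
  have := @dvdn_leq n 4 isT H4.
  have : n != 3%N by apply: contraTneq H4 => ->.
  lia.
have d2 : d = 2%N by apply: (Zn_eq Hn) => //; rewrite n4.
by case: Hnd => /eqP.
Qed.

Lemma sig2_arr (v : Vert n) b w c : sig (sa v b) (w, [:: c]) = 0.
Proof.
rewrite /sigma big1 // => v' _; rewrite big1 // => b' _.
case: (eqVneq (sa v b (v', [:: b'])) 0) => [->|H1]; first by rewrite mul0r.
case: (eqVneq (sa v' b' (w, [:: c])) 0) => [->|H2]; first by rewrite mulr0.
exfalso.
case: (key H1) => [[b1 [Ep E1]]|[Ep _]]; last by case: Ep.
case: Ep => Ev Eb; subst v' b1.
case: (key H2) => [[c1 [Ep E2]]|[Ep _]]; last by case: Ep.
case: Ep => Ew Ec; subst w c1.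
exact: noA E1 E2.
Qed.

Lemma iter_eq (T : Type) (f : T -> T) x i j : i = j -> iter i f x = iter j f x.
Proof. by move=> ->. Qed.

Lemma iter_zero j : iter j sig (kq_zero k n) = kq_zero k n.
Proof. by elim: j => //= j ->; apply: sig_zero. Qed.

Lemma main (v : Vert n) b : iter r sig (arrow v b) = kq_zero k n.
Proof.
have [Hr3|Hr2] : (3 <= r)%N \/ r = 2%N by lia.
  rewrite (iter_eq _ _ (esym (subnK Hr3))) iterD /= sig_arrow sig_zero ?iter_zero //.
  by move=> w c; apply: sig2_arr.
rewrite (iter_eq _ _ Hr2) /= sig_arrow.
apply: functional_extensionality => p.
set t := step v b.
case: (boolP [exists b0 : bool, (step v b0 == t + d%:R) && (v == step v b0 + d%:R)]) => [/existsP [b0 /andP [/eqP E1 /eqP E2]] | Hne]; last first.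
  rewrite /sigma big1 // => v' _; rewrite big1 // => b' _.
  case: (eqVneq (sa v b (v', [:: b'])) 0) => [->|H1]; first by rewrite mul0r.
  case: (eqVneq (sa v' b' p) 0) => [->|H2]; first by rewrite mulr0.
  exfalso.
  case: (key H1) => [[b1 [Ep E1]]|[Ep _]]; last by case: Ep.
  case: Ep => Ev Eb; subst v' b1.
  case: (key H2) => [[c1 [Ep E2]]|[Ep E2]]; first exact: noA E1 E2.
  move/negP: Hne; apply; apply/existsP; exists b'; rewrite -/t -E1 eqxx /=.
  by apply/eqP.
have H3 : (3%:R : Vert n) = 0.
  by case: (ZnB E1 E2) => // Z; move: Hd; rewrite Z eqxx.
have Hp2 : 2.-primitive_root lam by rewrite -Hr2.
have G0 : forall i, gamma act i = 0.
  move=> i.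
  have c3 : i + d%:R + d%:R + d%:R = i.
    have -> : i + d%:R + d%:R + d%:R = i + d%:R * 3%:R by ring.
    by rewrite H3 mulr0 addr0.
  have := V3 (i + d%:R + d%:R); rewrite c3 (V3 (i + d%:R)) (V3 i).
  have l2 : lam ^+ 2 = 1 by apply: prim_expr_order.
  have l1 : lam != 1 by move: (prim_order_dvd Hp2 1); rewrite expr1 => <-.
  move/eqP; rewrite !mulrA -subr_eq0 -{1}(mul1r (gamma act i)) -mulrBl mulf_eq0.
  case/orP => [|/eqP //].
  rewrite (_ : lam^-1 * lam^-1 * lam^-1 = lam^-1 * (lam ^+ 2)^-1); last first.
    by rewrite -exprVn expr2 mulrA.
  rewrite l2 invr1 mulr1 subr_eq0 eq_sym invr_eq1 => l1'.
  by rewrite l1' in l1.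
have SX : forall w c q, sa w c q = X (arrow w c) q.
  by move=> w c q; rewrite /sigma_arr !G0 !mul0r subr0 addr0.
set al := sa v b (v, [:: b0]).
have Xa : X (arrow v b) = kq_scale al (arrow v b0).
  apply: functional_extensionality => q; rewrite -SX /kq_scale.
  case: (eqVneq (sa v b q) 0) => [Z|NZ].
    have [Eq|Nq] := eqVneq q (v, [:: b0]); first by rewrite /al -Eq Z mul0r.
    by rewrite Z /arrow (negbTE Nq) mulr0.
  case: (key NZ) => [[b1 [Eq Eb]]|[Eq Ev]].
    have eb : b1 = b0 by apply: (ZnD Hn (v:=v)); rewrite Eb E1.
    by rewrite Eq eb /al /arrow eqxx mulr1.
  exfalso; move: Hd; rewrite -/t in Ev; rewrite E1 -addrA in E2.
  have : t + d%:R + d%:R = t + d%:R + 0 by rewrite addr0 -addrA -E2.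
  by move/addrI => ->; rewrite eqxx.
have XX : X (X (arrow v b)) = kq_zero k n.
  rewrite -act_mul; last exact: finsupp_arrow.
  rewrite tmul_xx // act_zeroT //.
  exact: finsupp_arrow.
move: XX; rewrite Xa act_scale; last exact: finsupp_arrow.
move/(congr1 (fun F => F p)); rewrite /kq_scale /= => <-.
rewrite /sigma (sum_only v) => [|v' Hv']; last first.
  by rewrite big1 // => b' _; rewrite SX Xa /kq_scale arrow1 (negbTE Hv') mulr0 mul0r.
rewrite (sum_only b0) => [|b' Hb']; last by rewrite SX Xa /kq_scale arrow1 (negbTE Hb') andbF mulr0 mul0r.
by rewrite SX Xa /kq_scale arrow1 !eqxx mulr1 SX.
Qed.
End Act.

Unset Implicit Arguments.
Set Strict Implicit.

Theorem lemma3p4 (k : fieldType) (r m : nat) (lam : k) (n : nat)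
    (act : Telt k m r -> KQ k n -> KQ k n)
    (d : nat) (mu mus : Vert n -> k) :
  (1 < r)%N -> (0 < m)%N -> (r %| m)%N -> r.-primitive_root lam ->
  (r%:R : k) != 0 ->
  (3 <= n)%N ->
  taft_module_algebra lam act ->
  linear_action act ->
  inner_faithful lam act ->
  (0 < d)%N -> (d <= n - 1)%N ->
  (forall i : Vert n, mu i != 0) -> (forall i : Vert n, mus i != 0) ->
  (forall i : Vert n, act (tg k m r) (vert i) = vert (i + d%:R)) ->
  (forall i : Vert n, act (tg k m r) (arr_a i) = kq_scale (mu i) (arr_a (i + d%:R))) ->
  (forall i : Vert n, act (tg k m r) (arr_as i) = kq_scale (mus i) (arr_as (i + d%:R))) ->
  (n != 4%N \/ d != 2%N) ->
  forall (v : Vert n) (b : bool), iter r (sigma lam act) (arrow v b) = kq_zero k n.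
Proof.
move=> Hr1 Hm0 Hrm Hprim Hrk Hn3 Hmod Hlin Hif Hd0 Hdn Hmu Hmus Hgv Hga Hgas Hnd v b.
have Hm : (1 < m)%N := leq_trans Hr1 (dvdn_leq Hm0 Hrm).
have Hdn' : (d < n)%N by lia.
have Hd : (d%:R : Vert n) != 0.
  by apply/eqP => /(Zn_small Hn3 Hdn'); lia.
have Hga' : forall (w : Vert n) c, exists c0 : k,
    act (tg k m r) (arrow w c) = kq_scale c0 (arrow (w + d%:R) c).
  move=> w [].
    exists (mus (w - 1)).
    have -> : arrow w true = arr_as (w - 1) by rewrite /arr_as subrK.
    rewrite Hgas /arr_as.
    by have -> : w - 1 + d%:R + 1 = w + d%:R by ring.
  by exists (mu w); apply: Hga.
exact: (main Hm Hr1 Hmod Hlin Hd Hn3 Hdn' Hnd Hprim Hgv Hga' v b).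
Qed.
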